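(* If $\boldsymbol\mu$ is an invariant probability measure of the Markov transition semigroup $[\Pi_t,t\ge0]$, then $\boldsymbol\mu(\{0\}\times\mathbb R)=0$.
   Context: Fix $\delta\in\mathbb R$, $\gamma>0$, $D>0$. $[\Pi_t,t\ge0]$ is the Markov transition semigroup on $\mathbb R^2$ of the unique global strong solution of (N): $d\xi=-\xi^4\eta\,dt$, $d\eta=(\delta\xi+2\xi^3\eta^2-\gamma\xi^4\eta)dt+\sqrt{2D}\,dW$, with $W$ a standard Wiener process. *)

(* Defs.v *)
From HB Require Import structures.
From mathcomp Require Import all_boot all_order all_algebra.
From mathcomp Require Import all_classical all_reals all_analysis.
Set Implicit Arguments. Unset Strict Implicit. Unset Printing Implicit Defensive.
Import Order.TTheory GRing.Theory Num.Theory.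
Import numFieldNormedType.Exports.
Local Open Scope classical_set_scope.
Local Open Scope ring_scope.

Definition is_wiener {R : realType} {d : measure_display} {Omega : measurableType d}
  (P : probability Omega R) (W : R -> Omega -> R) : Prop :=
  [/\ (forall w, W 0 w = 0),
      (forall w, {within `[0, +oo[, continuous (fun t => W t w)}),
      (forall t, measurable_fun setT (W t)),
      (forall s t, 0 <= s -> s < t -> forall B : set R, measurable B ->
         P [set w | W t w - W s w \in B] = normal_prob 0 (Num.sqrt (t - s)) B) &
      (forall (n : nat) (ts : nat -> R), 0 <= ts 0%N ->
         (forall i, (i < n)%N -> ts i < ts i.+1) ->
         forall B : nat -> set R, (forall i, measurable (B i)) ->
         P (\bigcap_(i < n) [set w | W (ts i.+1) w - W (ts i) w \in B i])
         = (\prod_(i < n) P [set w | (W (ts i.+1) w - W (ts i) w)%R \in B i])%E)].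

(* X is a (global, continuous) strong solution family of the SDE (N)
   d xi = - xi^4 eta dt,
   d eta = (delta xi + 2 xi^3 eta^2 - gamma xi^4 eta) dt + sqrt(2D) dW,
   started at every z = (x, y) : X z t w is the state at time t >= 0 on
   sample w. *)
Definition is_solution_N {R : realType} {d : measure_display} {Omega : measurableType d}
  (delta gamma D : R) (P : probability Omega R) (W : R -> Omega -> R)
  (X : R * R -> R -> Omega -> R * R) : Prop :=
  forall z : R * R, \forall w \ae P,
    {within `[0, +oo[, continuous (fun t => X z t w)} /\
    forall t, 0 <= t ->
      (X z t w).1 = z.1 - Rintegral lebesgue_measure `[0, t]
                      (fun s => (X z s w).1 ^+ 4 * (X z s w).2) /\
      (X z t w).2 = z.2 + Rintegral lebesgue_measure `[0, t]
                      (fun s => delta * (X z s w).1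
                                + 2 * (X z s w).1 ^+ 3 * (X z s w).2 ^+ 2
                                - gamma * (X z s w).1 ^+ 4 * (X z s w).2)
                    + Num.sqrt (2 * D) * W t w.

Definition transition {R : realType} {d : measure_display} {Omega : measurableType d}
  (P : probability Omega R) (X : R * R -> R -> Omega -> R * R)
  (t : R) (z : R * R) (A : set (R * R)) : \bar R :=
  P [set w | X z t w \in A].

Definition invariant_measure {R : realType} {d : measure_display} {Omega : measurableType d}
  (P : probability Omega R) (X : R * R -> R -> Omega -> R * R)
  (mu : probability (R * R)%type R) : Prop :=
  forall t, 0 <= t -> forall A : set (R * R), measurable A ->
    (\int[mu]_z transition P X t z A)%E = mu A.

(* Main.v *)
Require Import Defs.
From HB Require Import structures.
From mathcomp Require Import all_boot all_order all_algebra.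
From mathcomp Require Import all_classical all_reals all_analysis.
From mathcomp Require Import ring lra.
Import Order.TTheory GRing.Theory Num.Theory.
Import numFieldNormedType.Exports.
Local Open Scope classical_set_scope.
Local Open Scope ring_scope.

Section aux.
Set Implicit Arguments. Unset Strict Implicit.

Section ode.
Context {R : realType}.
Notation mu := (@lebesgue_measure R).

Lemma cont_int (f : R -> R) : {within `[0, +oo[, continuous f} ->
  forall u, mu.-integrable `[0, u] (EFin \o f).
Proof.
move=> cf u; apply: continuous_compact_integrable; first exact: segment_compact.
apply: continuous_subspaceW cf => s /=; rewrite !in_itv /= => /andP[-> _] //.
Qed.

Lemma ode_const (x g : R -> R) (x0 : R) :
  {within `[0, +oo[, continuous x} -> {within `[0, +oo[, continuous g} ->
  (forall t, 0 <= t -> x t = x0 - \int[mu]_(s in `[0, t]) (x s * g s)) ->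
  forall t, 0 <= t -> x t * expR (\int[mu]_(s in `[0, t]) g s) = x0.
Proof.
move=> cx cg hx T; rewrite le_eqVlt => /predU1P[<-|T0].
  by rewrite set_itv1 Rintegral_set1 expR0 mulr1 hx // set_itv1 Rintegral_set1 subr0.
pose xg := fun s => x s * g s.
have cxg : {within `[0,+oo[, continuous xg} by move=> s; apply: continuousM; [exact: cx|exact: cg].
pose F := fun t => \int[mu]_(s in `[0,t]) xg s.
pose G := fun t => \int[mu]_(s in `[0,t]) g s.
pose h : R -> R := (cst x0 - F) * (expR \o G).
have hE : forall t, h t = (x0 - F t) * expR (G t) by [].
have -> : x T * expR (G T) = h T by rewrite hE /F /xg -hx // ltW.
have h0 : h 0 = x0 by rewrite hE /F /G !set_itv1 !Rintegral_set1 expR0 mulr1 subr0.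
rewrite -h0.
have hd : forall t, t \in `]0, T[ -> is_derive t 1 h 0.
  move=> t; rewrite in_itv /= => /andP[t0 tT].
  have tT1 : t < T + 1 by rewrite (lt_trans tT) // ltrDl.
  have ct : forall f : R -> R, {within `[0, +oo[, continuous f} -> {for t, continuous f}.
    move=> f cf; have [+ _] := (continuous_within_itvcyP 0 f).1 cf.
    by apply; rewrite in_itv /= t0.
  have [dF F'] := continuous_FTC1_closed tT1 (cont_int cxg (T + 1)) t0 (ct _ cxg).
  have [dG G'] := continuous_FTC1_closed tT1 (cont_int cg (T + 1)) t0 (ct _ cg).
  have iF : is_derive t 1 F (xg t) by rewrite -F' derive1E; exact: derivableP.
  have iG : is_derive t 1 G (g t) by rewrite -G' derive1E; exact: derivableP.
  have iE : is_derive t 1 (expR \o G) (expR (G t) * g t) by exact: is_derive1_comp.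
  have iH : is_derive t 1 (cst x0 - F) (- xg t).
    have := is_deriveB (is_derive_cst x0 t 1) iF. by rewrite sub0r.
  have := is_deriveM iH iE.
  move=> /is_derive_eq; apply.
  have -> : (cst x0 - F) t = x t by rewrite (hx t (ltW t0)).
  rewrite /xg /= /GRing.scale /=; ring.
have hc : {within `[0, T], continuous h}.
  have cF : {within `[0, T], continuous F}.
    exact: (parameterized_integral_continuous (ltW T0) (cont_int cxg T)).
  have cG : {within `[0, T], continuous G}.
    exact: (parameterized_integral_continuous (ltW T0) (cont_int cg T)).
  move=> s; apply: continuousM.
    by apply: continuousB; [exact: cst_continuous|exact: cF].
  apply: continuous_comp; first exact: cG.
  exact: continuous_expR.
have [c _] := @MVT_segment R h (fun=> 0) 0 T (ltW T0) hd hc.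
by rewrite mul0r => /eqP; rewrite subr_eq0 => /eqP.
Qed.


Lemma within_fst (p : R -> R * R) : {within `[0, +oo[, continuous p} ->
  {within `[0, +oo[, continuous (fun t => (p t).1)}.
Proof. by move=> cp s; apply: continuous_comp; [exact: cp|exact: cvg_fst]. Qed.

Lemma within_snd (p : R -> R * R) : {within `[0, +oo[, continuous p} ->
  {within `[0, +oo[, continuous (fun t => (p t).2)}.
Proof. by move=> cp s; apply: continuous_comp; [exact: cp|exact: cvg_snd]. Qed.

Lemma path_x (p : R -> R * R) (x0 : R) :
  {within `[0, +oo[, continuous p} ->
  (forall t, 0 <= t -> (p t).1 = x0 - \int[mu]_(s in `[0, t]) ((p s).1 ^+ 4 * (p s).2)) ->
  forall t, 0 <= t -> ((p t).1 = 0 <-> x0 = 0).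
Proof.
move=> cp hp t t0.
have cx := within_fst cp; have cy := within_snd cp.
have cg : {within `[0, +oo[, continuous (fun s => (p s).1 ^+ 3 * (p s).2)}.
  pose x3 := fun s => (p s).1 ^+ 3.
  have c3 : {within `[0, +oo[, continuous x3}.
    move=> s; exact: (continuous_comp (cx s) (@exprn_continuous R 3 _)).
  have -> : (fun s => (p s).1 ^+ 3 * (p s).2) = (fun s => x3 s * (p s).2) by [].
  by move=> s; apply: continuousM; [exact: c3|exact: cy].
have := @ode_const (fun s => (p s).1) (fun s => (p s).1 ^+ 3 * (p s).2) x0 cx cg.
have hp' : forall t, 0 <= t -> (p t).1 = x0 - \int[mu]_(s in `[0, t]) ((p s).1 * ((p s).1 ^+ 3 * (p s).2)).
  move=> r r0; rewrite hp //; congr (_ - _); apply: eq_Rintegral => s _.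
  by rewrite mulrA -exprS.
move=> /(_ hp' t t0) <-; split => [->|]; first by rewrite mul0r.
by move/eqP; rewrite mulf_eq0 (gt_eqF (expR_gt0 _)) orbF => /eqP.
Qed.

End ode.

Section meas.
Context {R : realType}.
Notation mu := (@lebesgue_measure R).

Lemma normal_prob_le (s a b : R) : s != 0 -> a <= b ->
  (normal_prob 0 s `[a, b] <= (normal_peak s * (b - a))%:E)%E.
Proof.
move=> s0 ab; rewrite /normal_prob.
apply: (@le_trans _ _ (\int[mu]_(x in `[a, b]) (cst (normal_peak s)%:E) x)%E).
  apply: ge0_le_integral => //.
  - by move=> x _; rewrite lee_fin normal_pdf_ge0.
  - apply/measurable_realfun.measurable_EFinP; apply: measurable_funTS; exact: measurable_normal_pdf.
  - by move=> x _; rewrite lee_fin normal_pdf_ub.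
rewrite integral_cst //.
set m := (X in (_ * X <= _)%E).
have E := lebesgue_measure_itv `[a, b]; rewrite /= in E.
have -> : m = (if (a%:E < b%:E)%E then (b - a)%:E else 0)%E by exact E.
case: ifPn => [_|]; first by rewrite -EFinM.
rewrite lte_fin -leNgt => ba.
have -> : b = a by apply/eqP; rewrite eq_le ab ba.
by rewrite subrr mulr0 mule0.
Qed.

Lemma int_zero (f : R -> R) t : (forall s, 0 <= s -> f s = 0) ->
  \int[mu]_(s in `[0, t]) f s = 0.
Proof.
move=> f0; rewrite (@eq_Rintegral _ _ _ _ _ (fun=> 0)); last first.
  move=> s; rewrite inE /= in_itv /= => /andP[s0 _]; exact: f0.
by rewrite Rintegral_cst // mul0r.
Qed.

End meas.

End aux.

Theorem lemma3 (R : realType) (delta gamma D : R) (hgamma : 0 < gamma) (hD : 0 < D)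
  (d : measure_display) (Omega : measurableType d) (P : probability Omega R)
  (W : R -> Omega -> R) (X : R * R -> R -> Omega -> R * R)
  (hW : is_wiener P W)
  (hX : is_solution_N delta gamma D P W X)
  (hXmeas : forall t, 0 <= t ->
     measurable_fun setT (fun zw : (R * R) * Omega => X zw.1 t zw.2))
  (mu : probability (R * R)%type R)
  (hmu : invariant_measure P X mu) :
  mu [set z | z.1 = 0] = 0%E.
Proof.
have [W0 _ Wm Wgauss _] := hW.
pose c := Num.sqrt (2 * D).
have c0 : 0 < c by rewrite sqrtr_gt0 mulr_gt0.
pose A (K : R) : set (R * R) := [set (0 : R)] `*` `[-K, K].
have mA : forall K, measurable (A K).
  by move=> K; apply: measurableX; [exact: measurable_set1|exact: measurable_itv].
have bound : forall K t, 0 < K -> 0 < t -> forall z,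
    (transition P X t z (A K) <= (normal_peak (Num.sqrt t) * (2 * K / c))%:E)%E.
  move=> K t K0 t0 z; rewrite /transition.
  have mE : measurable [set w | X z t w \in A K].
    have mf := measurable_fun_pair2 z (hXmeas t (ltW t0)).
    have := mf measurableT _ (mA K); rewrite setTI.
    congr measurable; apply/seteqP; split => w /=; by rewrite inE.
  have [N [mN PN0 sub]] := hX z.
  have good : forall w, ~ N w -> {within `[0, +oo[, continuous (X z)^~ w} /\
      (forall s, 0 <= s -> ((X z s w).1 = 0 <-> z.1 = 0)) /\
      (z.1 = 0 -> (X z t w).2 = z.2 + c * W t w).
    move=> w nN.
    set Q := (X in ~` X `<=` N) in sub.
    have : Q w by apply: contrapT => nQ; exact: nN (sub w nQ).
    rewrite /Q /= => -[cw hw].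
    have hx := path_x cw (fun s s0 => (hw s s0).1).
    split => //; split => // z10.
    rewrite (hw t (ltW t0)).2 int_zero ?addr0 //.
    move=> s s0; have -> : (X z s w).1 = 0 by apply/(hx s s0).
    ring.
  have PE' : forall E', measurable E' -> [set w | X z t w \in A K] `<=` N `|` E' ->
      (P [set w | X z t w \in A K] <= P E')%E.
    move=> E' mE' sE; apply: (le_trans (le_measure _ _ _ sE)); rewrite ?inE //.
      exact: measurableU.
    apply: (le_trans (measureU2 _ _ _)) => //.
    by rewrite [X in (X + _)%E]PN0 add0e.
  case: (eqVneq z.1 0) => z1; last first.
    apply: (le_trans (PE' set0 measurable0 _)); last first.
      by rewrite [X in (X <= _)%E]measure0 lee_fin mulr_ge0 ?normal_peak_ge0 // divr_ge0 ?mulr_ge0 ?ltW.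
    move=> w; rewrite /= inE => -[x1 _]; left; apply: contrapT => nN.
    have [_ [hx _]] := good w nN; move/eqP: z1; apply; exact: (hx t (ltW t0)).1 x1.
  pose a := (- K - z.2) / c; pose b := (K - z.2) / c.
  have ab : a <= b by rewrite ler_pM2r ?invr_gt0 //; lra.
  pose E' := [set w | W t w - W 0 w \in `[a, b]].
  have mE' : measurable E'.
    have := Wm t measurableT _ (measurable_itv `[a, b]); rewrite setTI.
    congr measurable; apply/seteqP; split => w /=; rewrite /E' /= W0 subr0; move=> h; exact h.
  apply: (le_trans (PE' E' mE' _)).
    move=> w; rewrite /= inE => -[x1 y1].
    case: (pselect (N w)) => [|nN]; [by left|right].
    have [_ [_ hy]] := good w nN; have := hy z1.
    rewrite /E' /= W0 subr0 => hyw.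
    have : W t w \in `[a, b]%R; last by move=> h; exact h.
    rewrite in_itv /=.
    move: y1; rewrite /= in_itv /= => /andP[yl yu].
    have -> : W t w = ((X z t w).2 - z.2) / c.
      by rewrite hyw; field; rewrite gt_eqF.
    by rewrite !ler_pM2r ?invr_gt0 //; apply/andP; split; lra.
  have PEeq : P E' = normal_prob 0 (Num.sqrt (t - 0)) `[a, b]%classic.
    have := Wgauss 0 t (lexx 0) t0 `[a, b]%classic (measurable_itv _).
    move=> <-; congr (P _); apply/seteqP; split => w /=; rewrite in_setE /= => h; exact h.
  rewrite [X in (X <= _)%E]PEeq subr0.
  apply: (le_trans (normal_prob_le _ _)); first by rewrite gt_eqF // sqrtr_gt0.
    exact: ab.
  rewrite lee_fin ler_pM2l ?normal_peak_gt0 ?gt_eqF ?sqrtr_gt0 //.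
  by rewrite le_eqVlt; apply/orP; left; apply/eqP; rewrite /a /b; field; rewrite gt_eqF.
have key : forall K, 0 < K -> mu (A K) = 0%E.
  move=> K K0; apply/eqP; rewrite eq_le measure_ge0 andbT.
  apply/lee_addgt0Pr => r r0; rewrite add0e.
  pose M := 2 * K / c.
  have M0 : 0 < M by rewrite divr_gt0 ?mulr_gt0.
  pose t := (M / r) ^+ 2.
  have t0 : 0 < t by rewrite exprn_gt0 // divr_gt0.
  rewrite -(hmu t (ltW t0) (A K) (mA K)).
  apply: (@le_trans _ _ (\int[mu]_z (cst (normal_peak (Num.sqrt t) * M)%:E) z)%E).
    apply: ge0_le_integral => //.
    - pose S := (fun zw : (R * R) * Omega => X zw.1 t zw.2) @^-1` (A K).
      have mS : measurable S.
        by have := hXmeas t (ltW t0) measurableT _ (mA K); rewrite setTI.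
      have -> : (transition P X t)^~ (A K) = P \o xsection S.
        apply/funext => z; rewrite /transition /=; congr (P _).
      exact: (measurable_fun_xsection P mS).
    - by move=> z _; exact: bound.
  rewrite integral_cst // [X in (_ * X)%E]probability_setT mule1 lee_fin.
  have st : Num.sqrt t = M / r by rewrite sqrtr_sqr ger0_norm // divr_ge0 // ltW.
  have pi2 := pi_ge2 R.
  have h1 : M / r <= Num.sqrt (Num.sqrt t ^+ 2 * pi *+ 2).
    rewrite -st (sqr_sqrtr (ltW t0)) ler_sqrt; last by rewrite mulrn_wge0 // mulr_ge0 // ltW // (lt_le_trans _ pi2).
    rewrite mulr2n; nra.
  have sq0 : 0 < Num.sqrt (Num.sqrt t ^+ 2 * pi *+ 2) by apply: lt_le_trans h1; rewrite divr_gt0.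
  rewrite /normal_peak mulrC -/(_ / _) ler_pdivrMr //.
  by move: h1; rewrite ler_pdivrMr // mulrC.
have mL : measurable [set z : R * R | z.1 = 0].
  have -> : [set z : R * R | z.1 = 0] = [set (0 : R)] `*` setT.
    by apply/seteqP; split => z /= => [->|[]].
  by apply: measurableX; [exact: measurable_set1|exact: measurableT].
apply/eqP; rewrite eq_le measure_ge0 andbT.
have := @measure_sigma_subadditive _ _ _ mu [set z : R * R | z.1 = 0] (fun n => A n.+1%:R) (fun n => mA _) mL.
rewrite /subset_sigma_subadditive eseries0; first apply.
  move=> z /= z1; exists (Num.trunc `|z.2|); first by [].
  split => //=; rewrite in_itv /= -ler_norml; apply: ltW.
  exact: truncnS_gt.
by move=> n _ _; apply: key.
Qed.
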